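(* Let $k\ge 2$, $w=2^k-1$, $v=2^{k-1}$. For $j\ge1$ let $\tilde U_j^R$ be the sequence of jump lengths consisting of one jump of length $2^j+2^{j-1}-1$ followed by $2^j-1$ jumps of length $1$. Consider a line of $w$ cells indexed $0,\dots,w-1$, all empty except one cell with even index $p\in\{0,2,\dots,w-1\}$ (arbitrary), on which the frog stands. Then for the fixed sequence $\tilde U_1^R,\tilde U_2^R,\dots,\tilde U_{k-1}^R$ there is a valid execution that visits every cell of the line exactly once and ends with the frog on the center cell $v-1$.
   Context: A frog on a line of cells performs a given sequence of positive jump lengths; for each jump it chooses a direction, moving from position $q$ to $q+J$ or $q-J$. An execution is valid if every landing cell lies on the line, is not blocked, and has not been visited before (the starting cell counts as visited). Cells are indexed from $0$. *)

(* Defs.v *)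
From mathcomp Require Import all_boot all_order all_algebra.
Set Implicit Arguments. Unset Strict Implicit. Unset Printing Implicit Defensive.
Import Order.TTheory GRing.Theory Num.Theory.
Local Open Scope ring_scope.

Definition UjumpR (j : nat) : seq nat :=
  ((2 ^ j + 2 ^ j.-1 - 1)%N) :: nseq (2 ^ j - 1)%N 1%N.

Definition jumps (k : nat) : seq nat :=
  flatten [seq UjumpR j | j <- iota 1 k.-1].

Definition step (q : int) (jd : nat * bool) : int :=
  if jd.2 then q + (jd.1)%:Z else q - (jd.1)%:Z.

Definition landings (q0 : int) (js : seq nat) (ds : seq bool) : seq int :=
  scanl step q0 (zip js ds).

Definition final_pos (q0 : int) (js : seq nat) (ds : seq bool) : int :=
  last q0 (landings q0 js ds).

Definition valid_exec (n : nat) (blocked : pred int) (q0 : int)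
    (js : seq nat) (ds : seq bool) : Prop :=
  size ds = size js /\
  (forall q, q \in landings q0 js ds -> 0 <= q < n%:Z /\ ~~ blocked q) /\
  uniq (q0 :: landings q0 js ds).

Definition visits_all (n : nat) (q0 : int) (js : seq nat) (ds : seq bool) : Prop :=
  forall c : nat, (c < n)%N -> c%:Z \in q0 :: landings q0 js ds.

(* Main.v *)
Require Import Defs.
From mathcomp Require Import all_boot all_order all_algebra zify.
Import Order.TTheory GRing.Theory Num.Theory.
Local Open Scope ring_scope.

Set Implicit Arguments.
Definition Blk (s : seq int) (lo len : int) :=
  uniq s /\ forall q, q \in s <-> (lo <= q /\ q < lo + len).

Lemma Blk_cat s1 s2 l1 a l2 b lo : Blk s1 l1 a -> Blk s2 l2 b ->
  (l2 = l1 + a /\ lo = l1) \/ (l1 = l2 + b /\ lo = l2) ->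
  0 <= a -> 0 <= b ->
  Blk (s1 ++ s2) lo (a + b).
Proof.
move=> [u1 H1] [u2 H2] Hl ha hb; split.
  rewrite cat_uniq u1 u2 /= andbT; apply/hasPn => q /H2 hq.
  apply/negP => /H1 hq'; lia.
move=> q; rewrite mem_cat; split.
  by case/orP => [/H1|/H2]; lia.
move=> hq; case E: (q \in s1) => //=.
apply/H2; have : ~ (l1 <= q /\ q < l1 + a) by rewrite -H1 E.
lia.
Qed.

Lemma Blk1 x : Blk [:: x] x 1.
Proof.
split => // q; rewrite inE; split; first by move/eqP->; lia.
move=> h; apply/eqP; lia.
Qed.

Lemma ones m y b :
  Blk (scanl step y (nseq m (1%N, b))) (if b then y + 1 else y - m%:Z) m%:Z /\
  last y (scanl step y (nseq m (1%N, b))) = if b then y + m%:Z else y - m%:Z.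
Proof.
elim: m y => [|m IH] y.
  split; last by case: b => /=; lia.
  split => // q; rewrite in_nil; split => //; lia.
rewrite /= /step /=.
have [Hb Hl] := IH (if b then y + 1 else y - 1); clear IH.
split; last by rewrite Hl; case: b Hb {Hl}; lia.
rewrite -cat1s.
case: b Hb {Hl} => /= Hb.
  have -> : (Posz m.+1) = 1 + m%:Z by lia.
  apply: (Blk_cat (Blk1 (y+1)) Hb); lia.
have -> : (Posz m.+1) = 1 + m%:Z by lia.
apply: (Blk_cat (Blk1 (y-1)) Hb); lia.
Qed.

Lemma foldl_last (x : int) s : foldl step x s = last x (scanl step x s).
Proof. by elim: s x => //= y s IH x. Qed.

Lemma landings_cat c js1 js2 ds1 ds2 : size ds1 = size js1 ->
  landings c (js1 ++ js2) (ds1 ++ ds2) =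
  landings c js1 ds1 ++ landings (final_pos c js1 ds1) js2 ds2.
Proof.
by move=> h; rewrite /landings zip_cat ?scanl_cat ?foldl_last.
Qed.

Lemma zip_nseq' (A B : Type) m (a : A) (b : B) : zip (nseq m a) (nseq m b) = nseq m (a, b).
Proof. by elim: m => //= m ->. Qed.

Definition Jn n := flatten [seq UjumpR j | j <- iota 1 n].

Lemma Jn_S n : Jn n.+1 = Jn n ++ UjumpR n.+1.
Proof.
rewrite /Jn.
have -> : iota 1 n.+1 = iota 1 n ++ [:: n.+1].
  by rewrite -(addn1 n) iotaD add1n addn1.
by rewrite map_cat flatten_cat /= cats0.
Qed.

Lemma stage x n b :
  let N := (2 ^ n)%N%:Z in
  size (b :: nseq (2 * 2 ^ n - 1) (~~ b)) = size (UjumpR n.+1) /\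
  Blk (landings x (UjumpR n.+1) (b :: nseq (2 * 2 ^ n - 1) (~~ b)))
      (if b then x + N else x - (3 * N - 1)) (2 * N) /\
  final_pos x (UjumpR n.+1) (b :: nseq (2 * 2 ^ n - 1) (~~ b)) = if b then x + N else x - N.
Proof.
move=> N.
have hN : (1 <= 2 ^ n)%N by rewrite expn_gt0.
rewrite /UjumpR /= expnS; split; first by rewrite !size_nseq.
rewrite /final_pos /landings /= zip_nseq'.
have [Hb Hl] := ones (2 * 2 ^ n - 1) (step x ((2 * 2 ^ n + 2 ^ n - 1)%N, b)) (~~ b).
rewrite Hl; split; last first.
  rewrite /step /=; case: b {Hb Hl} => /=; rewrite /N; lia.
rewrite -cat1s.
case: b Hb {Hl} => /= Hb; rewrite /step /= in Hb *.
  have -> : 2 * N = 1 + (2 * 2 ^ n - 1)%N%:Z by rewrite /N; lia.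
  apply: (Blk_cat (Blk1 _) Hb); rewrite /N; lia.
have -> : 2 * N = 1 + (2 * 2 ^ n - 1)%N%:Z by rewrite /N; lia.
apply: (Blk_cat (Blk1 _) Hb); rewrite /N; lia.
Qed.

Lemma main n : forall c t a : int,
  0 <= a -> a <= (2 ^ n)%N%:Z - 1 -> t - c = 2 * a - ((2 ^ n)%N%:Z - 1) ->
  exists ds, size ds = size (Jn n) /\
    Blk (c :: landings c (Jn n) ds) (t - ((2 ^ n)%N%:Z - 1)) (2 * (2 ^ n)%N%:Z - 1) /\
    final_pos c (Jn n) ds = t.
Proof.
elim: n => [|n IH] c t a.
  rewrite expn0 /= => h1 h2 h3.
  exists [::]; split => //; split => //.
  have -> : t - (1 - 1) = c by lia.
  have -> : 2 * 1 - 1 = 1 :> int by [].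
  exact: Blk1.
  rewrite /final_pos /=; lia.
have hN : (1 <= 2 ^ n)%N by rewrite expn_gt0.
rewrite expnS PoszM.
set N := (2 ^ n)%N%:Z => h1 h2 h3.
pose b := (N <= a).
pose t' := if b then t - N else t + N.
pose a' := if b then a - N else a.
have [ds' [Hs [HB Hf]]] : exists ds, size ds = size (Jn n) /\
    Blk (c :: landings c (Jn n) ds) (t' - (N - 1)) (2 * N - 1) /\
    final_pos c (Jn n) ds = t'.
  apply: (IH c t' a'); rewrite /t' /a' /b; case: ifP => /= hb; lia.
have [Ss [SB Sf]] := stage t' n b.
exists (ds' ++ (b :: nseq (2 * 2 ^ n - 1) (~~ b))).
rewrite Jn_S landings_cat //; split; first by rewrite !size_cat Hs Ss.
rewrite Hf; split; last first.
  rewrite /final_pos landings_cat // last_cat.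
  have -> : last c (landings c (Jn n) ds') = t' by [].
  rewrite Hf -/(final_pos t' _ _) Sf /t' /N; case: (b); lia.
change (Blk ((c :: landings c (Jn n) ds') ++
       landings t' (UjumpR n.+1) (b :: nseq (2 * 2 ^ n - 1) (~~ b)))
   (t - (2%Z * N - 1)) (2 * (2%Z * N) - 1)).
have -> : 2 * (2%Z * N) - 1 = (2 * N - 1) + 2 * N by lia.
apply: (Blk_cat HB SB); rewrite /t' /N; case: (b); lia.
Qed.

Theorem mainTheorem8 (k p : nat) :
  (2 <= k)%N -> ~~ odd p -> (p < 2 ^ k - 1)%N ->
  exists ds : seq bool,
    valid_exec (2 ^ k - 1) pred0 p%:Z (jumps k) ds /\
    visits_all (2 ^ k - 1) p%:Z (jumps k) ds /\
    final_pos p%:Z (jumps k) ds = (2 ^ k.-1 - 1)%N%:Z.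
Proof.
move=> hk hp hpk.
have Ej : jumps k = Jn k.-1 by [].
have Ek : (2 ^ k = 2 * 2 ^ k.-1)%N by rewrite -expnS prednK // (leq_trans _ hk).
have hN : (1 <= 2 ^ k.-1)%N by rewrite expn_gt0.
have hp2 := odd_double_half p; rewrite (negbTE hp) add0n in hp2.
have [ds [Hs [[Hu HB] Hf]]] := main k.-1 p%:Z (2 ^ k.-1 - 1)%N%:Z (2 ^ k.-1 - 1 - p./2)%N%:Z
  ltac:(lia) ltac:(lia) ltac:(lia).
rewrite Ej; exists ds; split; [split; [done|split]|split].
- move=> q hq; split => //; have := (HB q).1; rewrite inE hq orbT => /(_ isT).
  lia.
- done.
- move=> c hc; apply/HB; lia.
- rewrite Hf; lia.
Qed.
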